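(* If $G$ is a group in which every non-trivial element is a generalized torsion element, then $\mathrm{scl}_G(g)=0$ for all $g\in G$.
   Context: For $g,x$ in a group, $g^{x}:=xgx^{-1}$. A non-trivial element $g$ of a group $G$ is a generalized torsion element if there exist a positive integer $n$ and $x_1,\ldots,x_n\in G$ with $g^{x_1}g^{x_2}\cdots g^{x_n}=1$. For $g\in[G,G]$, the commutator length $\mathrm{cl}_G(g)$ is the least number of commutators whose product is $g$, and the stable commutator length is $\mathrm{scl}_G(g)=\lim_{n\to\infty}\mathrm{cl}_G(g^n)/n$. This is extended to all of $G$ by $\mathrm{scl}_G(g)=\mathrm{scl}_G(g^k)/k$ if $g^k\in[G,G]$ for some $k>0$, and $\mathrm{scl}_G(g)=\infty$ otherwise. *)

(* Defs.v *)
From Stdlib Require Import Reals List Classical ClassicalEpsilon.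
From Coquelicot Require Import Coquelicot.
Import ListNotations.
Open Scope R_scope.

Record Group (G : Type) := {
  gmul : G -> G -> G;
  ginv : G -> G;
  gone : G;
  gmulA : forall x y z, gmul x (gmul y z) = gmul (gmul x y) z;
  gmul1l : forall x, gmul gone x = x;
  gmul1r : forall x, gmul x gone = x;
  gmulVl : forall x, gmul (ginv x) x = gone;
  gmulVr : forall x, gmul x (ginv x) = gone
}.
Arguments gmul {G} _ _ _.
Arguments ginv {G} _ _.
Arguments gone {G} _.

Section GroupDefs.
Context {G : Type} (Gr : Group G).

Local Notation "x * y" := (gmul Gr x y).
Local Notation "x ^-1" := (ginv Gr x) (at level 3).
Local Notation "1" := (gone Gr).

Definition gconj (g x : G) : G := x * g * x^-1.

Definition gprod (l : list G) : G := fold_right (fun a b => a * b) 1 l.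

Fixpoint gpow (g : G) (n : nat) : G :=
  match n with O => 1 | S m => g * gpow g m end.

Definition gen_torsion (g : G) : Prop :=
  g <> 1 /\ exists xs : list G, xs <> [] /\ gprod (map (gconj g) xs) = 1.

Definition gcomm (a b : G) : G := a * b * a^-1 * b^-1.

Definition prod_n_comm (n : nat) (g : G) : Prop :=
  exists l : list (G * G), length l = n /\ gprod (map (fun p => gcomm (fst p) (snd p)) l) = g.

Definition in_derived (g : G) : Prop := exists n, prod_n_comm n g.

(** commutator length: the least number of commutators whose product is g
    (meaningful for g in [G,G]; arbitrary otherwise) *)
Definition cl (g : G) : nat :=
  epsilon (inhabits 0%nat)
    (fun n => prod_n_comm n g /\ forall m, prod_n_comm m g -> (n <= m)%nat).

Definition scl_derived (g : G) : Rbar :=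
  Lim_seq (fun n => INR (cl (gpow g n)) / INR n).

Definition scl (g : G) : Rbar :=
  match excluded_middle_informative (exists k, (0 < k)%nat /\ in_derived (gpow g k)) with
  | left _ =>
      let k := epsilon (inhabits 1%nat) (fun k => (0 < k)%nat /\ in_derived (gpow g k)) in
      Rbar_mult (scl_derived (gpow g k)) (Finite (/ INR k))
  | right _ => p_infty
  end.

End GroupDefs.

(* Main.v *)
Require Import Defs.
From Stdlib Require Import Reals.
From Coquelicot Require Import Coquelicot.
From Stdlib Require Import ZArith Lia Lra Psatz List Classical ClassicalEpsilon Arith.
Import ListNotations.

Section GL.
Context {G : Type} (Gr : Group G).
Local Notation "x * y" := (gmul Gr x y).
Local Notation "x ^-1" := (ginv Gr x) (at level 3).
Local Notation "1" := (gone Gr).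

Lemma cancA x z : x * (x^-1 * z) = z.
Proof. rewrite (gmulA _ Gr), (gmulVr _ Gr), (gmul1l _ Gr); auto. Qed.
Lemma cancB x z : x^-1 * (x * z) = z.
Proof. rewrite (gmulA _ Gr), (gmulVl _ Gr), (gmul1l _ Gr); auto. Qed.
Lemma inv_uniq x y : x * y = 1 -> y = x^-1.
Proof. intro H. rewrite <- (cancB x y), H, (gmul1r _ Gr). auto. Qed.
Lemma inv_mul x y : (x * y)^-1 = y^-1 * x^-1.
Proof. symmetry; apply inv_uniq. rewrite <- (gmulA _ Gr), (cancA y). apply (gmulVr _ Gr). Qed.
Lemma inv_inv x : (x^-1)^-1 = x.
Proof. symmetry; apply inv_uniq. apply (gmulVl _ Gr). Qed.
Lemma inv_one : 1^-1 = 1.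
Proof. symmetry; apply inv_uniq. apply (gmul1l _ Gr). Qed.

Ltac gs := repeat (rewrite ?inv_mul, ?inv_inv, ?inv_one, <- ?(gmulA _ Gr), ?(gmul1l _ Gr), ?(gmul1r _ Gr),
   ?(gmulVl _ Gr), ?(gmulVr _ Gr), ?cancA, ?cancB).

Lemma gprod_app l1 l2 : gprod Gr (l1 ++ l2) = gprod Gr l1 * gprod Gr l2.
Proof. induction l1; simpl. gs; auto. rewrite IHl1. gs; auto. Qed.

Lemma pnc_app a b x y : prod_n_comm Gr a x -> prod_n_comm Gr b y -> prod_n_comm Gr (a+b) (x*y).
Proof.
  intros [l1 [H1 E1]] [l2 [H2 E2]]. exists (l1 ++ l2). split.
  rewrite length_app; lia. rewrite map_app, gprod_app, E1, E2; auto.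
Qed.

Lemma pnc_0 : prod_n_comm Gr 0 1.
Proof. exists []; split; auto. Qed.

Lemma pnc_1 u v : prod_n_comm Gr 1 (gcomm Gr u v).
Proof. exists [(u,v)]; split; auto. simpl. gs. auto. Qed.

Lemma pnc_inv n x : prod_n_comm Gr n x -> prod_n_comm Gr n (x^-1).
Proof.
  intros [l [H E]]. subst x n. induction l as [|[u v] l IH]; simpl.
  - rewrite inv_one. apply pnc_0.
  - replace (S (length l)) with (length l + 1)%nat by lia.
    rewrite inv_mul. apply pnc_app. apply IH.
    replace (gcomm Gr u v)^-1 with (gcomm Gr v u). apply pnc_1.
    unfold gcomm. gs. auto.
Qed.

Lemma gpow_add x a b : gpow Gr x (a + b) = gpow Gr x a * gpow Gr x b.
Proof. induction a; simpl. gs; auto. rewrite IHa. gs; auto. Qed.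

Lemma gpow_mul x a b : gpow Gr x (a * b) = gpow Gr (gpow Gr x a) b.
Proof. rewrite Nat.mul_comm. induction b; simpl; auto. rewrite gpow_add, IHb; auto. Qed.

Lemma pnc_pow n x q : prod_n_comm Gr n x -> prod_n_comm Gr (q*n) (gpow Gr x q).
Proof. intro H. induction q; simpl. apply pnc_0. apply pnc_app; auto. Qed.

Lemma conj_prod a xs : exists C, prod_n_comm Gr (length xs) C /\
   gprod Gr (map (gconj Gr a) xs) = gpow Gr a (length xs) * C.
Proof.
  induction xs as [|x xs [C [HC E]]]; simpl.
  - exists 1. split. apply pnc_0. gs. auto.
  - set (p := gpow Gr a (length xs)) in *.
    exists (gcomm Gr (p^-1 * a^-1 * p) (p^-1 * x * p) * C). split.
    replace (S (length xs)) with (1 + length xs)%nat by lia. apply pnc_app; auto. apply pnc_1.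
    rewrite E. unfold gconj, gcomm. gs. auto.
Qed.

Lemma torsion_pow a : gen_torsion Gr a -> exists m, (0 < m)%nat /\ prod_n_comm Gr m (gpow Gr a m).
Proof.
  intros [_ [xs [Hne Hp]]]. destruct (conj_prod a xs) as [C [HC E]].
  exists (length xs). split. destruct xs; simpl; [congruence|lia].
  rewrite Hp in E. replace (gpow Gr a (length xs)) with C^-1. apply pnc_inv; auto.
  symmetry. apply (inv_uniq C). rewrite <- (cancB (gpow Gr a (length xs)) C), <- E.
  gs. auto.
Qed.

Lemma one_pow : prod_n_comm Gr 1 (gpow Gr 1 1).
Proof. simpl. replace (1*1) with (gcomm Gr 1 1). apply pnc_1. unfold gcomm. gs. auto. Qed.

End GL.

Lemma exists_min (P : nat -> Prop) : (exists n, P n) -> exists n, P n /\ forall m, P m -> (n <= m)%nat.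
Proof.
  intros [n Hn]. apply NNPP; intro Hno.
  assert (forall k, forall i, (i <= k)%nat -> ~ P i).
  { induction k; intros i Hi HP.
    - apply Hno. exists i. split; auto. intros; lia.
    - apply Hno. exists i. split; auto. intros m Hm.
      destruct (le_lt_dec i m); auto. exfalso. apply (IHk m); auto; lia. }
  apply (H n n); auto.
Qed.

Lemma cl_le {G} (Gr : Group G) x m : prod_n_comm Gr m x -> (cl Gr x <= m)%nat.
Proof.
  intro Hm. unfold cl.
  destruct (exists_min (fun n => prod_n_comm Gr n x)) as [n Hn]; [eauto|].
  pose proof (epsilon_spec (inhabits 0%nat)
    (fun n => prod_n_comm Gr n x /\ forall m, prod_n_comm Gr m x -> (n <= m)%nat)
    (ex_intro _ n Hn)) as [_ H]. apply H; auto.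
Qed.

Lemma every_pow {G} (Gr : Group G) :
  (forall g : G, g <> gone Gr -> gen_torsion Gr g) ->
  forall a, exists m, (0 < m)%nat /\ prod_n_comm Gr m (gpow Gr a m).
Proof.
  intros HT a. destruct (classic (a = gone Gr)) as [->|Hn].
  - exists 1%nat. split. lia. apply one_pow.
  - apply torsion_pow. auto.
Qed.

Lemma scl_der0 {G} (Gr : Group G) :
  (forall g : G, g <> gone Gr -> gen_torsion Gr g) ->
  forall h, in_derived Gr h -> scl_derived Gr h = Finite 0.
Proof.
  intros HT h [c Hc]. unfold scl_derived. apply is_lim_seq_unique.
  apply is_lim_seq_spec. intros [eps Heps]; simpl.
  destruct (archimed (2/eps)) as [Hj _].
  set (j := Z.to_nat (up (2/eps))).
  assert (Hj' : 2 < INR j * eps).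
  { unfold j. rewrite INR_IZR_INZ, Z2Nat.id.
    apply (Rmult_lt_compat_r eps) in Hj; auto. unfold Rdiv in Hj.
    rewrite Rmult_assoc, Rinv_l, Rmult_1_r in Hj; lra.
    apply le_IZR. assert (0 < 2/eps) by (apply Rdiv_lt_0_compat; lra). lra. }
  assert (j0 : (0 < j)%nat). { destruct j; simpl in Hj'; [lra|lia]. }
  destruct (every_pow Gr HT (gpow Gr h j)) as [m [Hm0 Hm]].
  set (B := (j*m*c)%nat).
  destruct (archimed (2 * INR B / eps)) as [HN _].
  set (N0 := S (Z.to_nat (up (2 * INR B / eps)))).
  exists N0. intros N HN0.
  assert (HNB : 2 * INR B < INR N * eps).
  { assert (INR N0 <= INR N) by (apply le_INR; lia).
    assert (2 * INR B / eps < INR N0).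
    { unfold N0. rewrite S_INR, (INR_IZR_INZ (Z.to_nat _)), Z2Nat.id. lra.
      apply le_IZR. assert (0 <= 2 * INR B / eps).
      { apply Rmult_le_pos. pose proof (pos_INR B); lra. left; apply Rinv_0_lt_compat; lra. }
      lra. }
    apply (Rmult_lt_compat_r eps) in H0; auto. unfold Rdiv in H0.
    rewrite Rmult_assoc, Rinv_l, Rmult_1_r in H0; nra. }
  assert (Npos : (0 < N)%nat) by lia.
  set (q := (N / (j*m))%nat). set (r := (N mod (j*m))%nat).
  assert (jm0 : (j*m <> 0)%nat) by lia.
  assert (HNd : N = (j*m*q + r)%nat) by (apply Nat.div_mod; auto).
  assert (Hr : (r < j*m)%nat) by (apply Nat.mod_upper_bound; auto).
  set (A := (q*m)%nat).
  assert (Hcl : (cl Gr (gpow Gr h N) <= A + B)%nat).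
  { apply Nat.le_trans with (A + r*c)%nat.
    apply cl_le. rewrite HNd, gpow_add. apply pnc_app.
    replace (j*m*q)%nat with (j*m*q)%nat by lia. rewrite !gpow_mul. apply pnc_pow; auto.
    apply pnc_pow; auto.
    unfold B. apply Nat.add_le_mono_l. apply Nat.mul_le_mono_r. lia. }
  assert (HA : (j * A <= N)%nat) by (unfold A; nia).
  apply le_INR in Hcl. apply le_INR in HA. rewrite plus_INR in Hcl. rewrite mult_INR in HA.
  assert (INR N > 0) by (apply lt_0_INR; auto).
  pose proof (pos_INR A). pose proof (pos_INR B). pose proof (pos_INR (cl Gr (gpow Gr h N))).
  rewrite Rminus_0_r, Rabs_pos_eq.
  2: { apply Rmult_le_pos; auto. left; apply Rinv_0_lt_compat; auto. }
  apply Rmult_lt_reg_r with (INR N); auto. unfold Rdiv. rewrite Rmult_assoc, Rinv_l, Rmult_1_r by lra.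
  assert (2 * INR A <= INR N * eps) by nra.
  lra.
Qed.

Theorem proposition3p3 (G : Type) (Gr : Group G) :
  (forall g : G, g <> gone Gr -> gen_torsion Gr g) ->
  forall g : G, scl Gr g = Finite 0%R.
Proof.
  intros HT g. unfold scl.
  destruct excluded_middle_informative as [Hex|Hno].
  - pose proof (epsilon_spec (inhabits 1%nat)
      (fun k => (0 < k)%nat /\ in_derived Gr (gpow Gr g k)) Hex) as [_ Hd].
    rewrite (scl_der0 Gr HT _ Hd). simpl. rewrite Rmult_0_l. auto.
  - exfalso. apply Hno. destruct (every_pow Gr HT g) as [m [Hm Hp]].
    exists m. split; auto. exists m; auto.
Qed.
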